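(* The maps $\eta:\widetilde{S}_{AB}\to\mathfrak{S}_A$, $\inf^{\widetilde{S}_{AB}}_{i\in I}\sigma_{i,A}\widetilde{\otimes}\sigma_{i,B}\mapsto\inf^{\mathfrak{S}_A}_{i\in I}\sigma_{i,A}$ and $\lambda:\widetilde{S}_{AB}\to\mathfrak{S}_B$, $\inf^{\widetilde{S}_{AB}}_{i\in I}\sigma_{i,A}\widetilde{\otimes}\sigma_{i,B}\mapsto\inf^{\mathfrak{S}_B}_{i\in I}\sigma_{i,B}$ are (well-defined) Inf semi-lattice homomorphisms.
   Context: $\mathfrak{B}=\{\mathbf{Y},\mathbf{N},\bot\}$ with meet $\wedge$ and product $\bullet$ ($x\bullet\mathbf{Y}=x$, $x\bullet\mathbf{N}=\mathbf{N}$, $\bot\bullet\bot=\bot$). $(\mathfrak{S}_A,\mathfrak{E}_A,\epsilon^{\mathfrak{S}_A})$, $(\mathfrak{S}_B,\mathfrak{E}_B,\epsilon^{\mathfrak{S}_B})$ are States/Effects Chu spaces (down-complete Inf semi-lattices, infima written $\inf$, evaluation maps preserving infima in each variable, a constant-$\mathbf{Y}$ effect $\mathfrak{Y}_{\mathfrak{E}}$ in each). The minimal tensor product $\widetilde{S}_{AB}$ consists of the maps $\inf^{\widetilde{S}_{AB}}_{i\in I}\sigma_{i,A}\widetilde{\otimes}\sigma_{i,B}:(\mathfrak{l}_A,\mathfrak{l}_B)\mapsto\bigwedge_{i\in I}\epsilon^{\mathfrak{S}_A}_{\mathfrak{l}_A}(\sigma_{i,A})\bullet\epsilon^{\mathfrak{S}_B}_{\mathfrak{l}_B}(\sigma_{i,B})$,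 ordered pointwise. *)

(* Defs.v *)
Inductive Bool3 : Type := BY | BN | Bbot.

Definition Ble (x y : Bool3) : Prop := x = y \/ x = Bbot.

Definition Bmeet (x y : Bool3) : Bool3 :=
  match x, y with
  | BY, BY => BY
  | BN, BN => BN
  | _, _ => Bbot
  end.

Definition Bprod (x y : Bool3) : Bool3 :=
  match x, y with
  | _, BY => x
  | _, BN => BN
  | BY, Bbot => Bbot
  | BN, Bbot => BN
  | Bbot, Bbot => Bbot
  end.

Definition is_glb {T : Type} (le : T -> T -> Prop) {I : Type} (f : I -> T) (x : T) : Prop :=
  (forall i, le x (f i)) /\ (forall y, (forall i, le y (f i)) -> le y x).

Record InfSL : Type := {
  car :> Type;
  le : car -> car -> Prop;
  le_refl : forall x, le x x;
  le_trans : forall x y z, le x y -> le y z -> le x z;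
  le_antisym : forall x y, le x y -> le y x -> x = y;
  inf : forall (I : Type), (I -> car) -> car;
  inf_glb : forall (I : Type) (f : I -> car), inhabited I -> is_glb le f (inf I f)
}.

Arguments le {_} _ _.
Arguments inf {_} {I} _.

Record ChuSE : Type := {
  St : InfSL;
  Ef : InfSL;
  eps : Ef -> St -> Bool3;
  eps_inf_St : forall (l : Ef) (I : Type) (f : I -> St), inhabited I ->
      is_glb Ble (fun i => eps l (f i)) (eps l (inf f));
  eps_inf_Ef : forall (s : St) (I : Type) (f : I -> Ef), inhabited I ->
      is_glb Ble (fun i => eps (f i) s) (eps (inf f) s);
  YE : Ef;
  eps_YE : forall s : St, eps YE s = BY;
  eps_sep : forall s s' : St, (forall l : Ef, eps l s = eps l s') -> s = s'
}.

Definition represents (A B : ChuSE) (g : Ef A -> Ef B -> Bool3)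
  {I : Type} (sA : I -> St A) (sB : I -> St B) : Prop :=
  inhabited I /\
  forall lA lB, is_glb Ble (fun i => Bprod (eps A lA (sA i)) (eps B lB (sB i))) (g lA lB).

Definition tensor (A B : ChuSE) : Type :=
  { g : Ef A -> Ef B -> Bool3 |
    exists (I : Type) (sA : I -> St A) (sB : I -> St B), represents A B g sA sB }.

Definition tensor_le (A B : ChuSE) (g h : tensor A B) : Prop :=
  forall lA lB, Ble (proj1_sig g lA lB) (proj1_sig h lA lB).

Definition InfHom (A B : ChuSE) (S : InfSL) (phi : tensor A B -> S) : Prop :=
  forall (J : Type) (g : J -> tensor A B) (h : tensor A B),
    inhabited J -> is_glb (tensor_le A B) g h ->
    is_glb le (fun j => phi (g j)) (phi h).

(* Main.v *)
Require Import Defs.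
From Stdlib Require Import ClassicalEpsilon.

Lemma Ble_refl x : Ble x x. Proof. left; reflexivity. Qed.
Lemma Ble_trans x y z : Ble x y -> Ble y z -> Ble x z.
Proof. unfold Ble; intros [H1|H1] [H2|H2]; subst; auto; congruence. Qed.
Lemma Ble_antisym x y : Ble x y -> Ble y x -> x = y.
Proof. unfold Ble; intros [H1|H1] [H2|H2]; subst; auto; congruence. Qed.
Lemma glb_unique {I} (f : I -> Bool3) x y : is_glb Ble f x -> is_glb Ble f y -> x = y.
Proof. intros [H1 H2] [H3 H4]; apply Ble_antisym; auto. Qed.
Lemma is_glb_ext {I} (f f' : I -> Bool3) x : is_glb Ble f x -> (forall i, f i = f' i) -> is_glb Ble f' x.
Proof. intros [H1 H2] E; split; intros; [rewrite <- E; auto | apply H2; intros i; rewrite E; auto]. Qed.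
Lemma Bprod_Y x : Bprod x BY = x. Proof. destruct x; reflexivity. Qed.
Lemma Bprod_Yl x : Bprod BY x = x. Proof. destruct x; reflexivity. Qed.

Definition glbB {I : Type} (f : I -> Bool3) : Bool3 :=
  if excluded_middle_informative (forall i, f i = BY) then BY
  else if excluded_middle_informative (forall i, f i = BN) then BN else Bbot.

Lemma Ble_Y x : Ble BY x -> x = BY. Proof. unfold Ble; intros [H|H]; congruence. Qed.
Lemma Ble_N x : Ble BN x -> x = BN. Proof. unfold Ble; intros [H|H]; congruence. Qed.
Lemma Ble_bot x : Ble Bbot x. Proof. right; reflexivity. Qed.

Lemma glbB_glb {I : Type} (f : I -> Bool3) : inhabited I -> is_glb Ble f (glbB f).
Proof.
  intros [i0]. unfold glbB. destruct (excluded_middle_informative _) as [H|H].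
  - split; [intros i; rewrite H; apply Ble_refl|].
    intros y Hy. specialize (Hy i0). rewrite H in Hy. exact Hy.
  - destruct (excluded_middle_informative _) as [H'|H'].
    + split; [intros i; rewrite H'; apply Ble_refl|].
      intros y Hy. specialize (Hy i0). rewrite H' in Hy. exact Hy.
    + split; [intros; apply Ble_bot|].
      intros y Hy. destruct y; [exfalso; apply H; intro i; apply Ble_Y, Hy
        | exfalso; apply H'; intro i; apply Ble_N, Hy | apply Ble_bot].
Qed.

Section Chu.
Variable C : ChuSE.

Lemma le_eps (s t : St C) : (forall l, Ble (eps C l s) (eps C l t)) -> le s t.
Proof.
  intros H. set (f := fun b : bool => if b then s else t).
  assert (E : inf f = s).
  { apply (eps_sep C). intros l.
    apply (glb_unique (fun b => eps C l (f b))).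
    - apply eps_inf_St. exact (inhabits true).
    - split. + intros [|]; simpl; [apply Ble_refl | apply H].
      + intros y Hy. exact (Hy true). }
  rewrite <- E. exact (proj1 (inf_glb _ _ f (inhabits true)) false).
Qed.

Lemma eps_le (s t : St C) l : le s t -> Ble (eps C l s) (eps C l t).
Proof.
  intros H. set (f := fun b : bool => if b then s else t).
  assert (E : inf f = s).
  { apply le_antisym.
    - exact (proj1 (inf_glb _ _ f (inhabits true)) true).
    - apply (proj2 (inf_glb _ _ f (inhabits true))). intros [|]; simpl; [apply le_refl|exact H]. }
  rewrite <- E. exact (proj1 (eps_inf_St C l _ f (inhabits true)) false).
Qed.
End Chu.

Section Main.
Variables A B : ChuSE.

Lemma repA (g : Ef A -> Ef B -> Bool3) I (sA : I -> St A) sB :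
  represents A B g sA sB -> forall lA, g lA (YE B) = eps A lA (inf sA).
Proof.
  intros [Hi H] lA. apply (glb_unique (fun i => eps A lA (sA i))).
  - eapply is_glb_ext. apply (H lA (YE B)). intros i; simpl. rewrite eps_YE. apply Bprod_Y.
  - apply eps_inf_St; exact Hi.
Qed.

Lemma repB (g : Ef A -> Ef B -> Bool3) I (sA : I -> St A) sB :
  represents A B g sA sB -> forall lB, g (YE A) lB = eps B lB (inf sB).
Proof.
  intros [Hi H] lB. apply (glb_unique (fun i => eps B lB (sB i))).
  - eapply is_glb_ext. apply (H (YE A) lB). intros i; simpl. rewrite eps_YE. apply Bprod_Yl.
  - apply eps_inf_St; exact Hi.
Qed.

Lemma exA (g : tensor A B) : exists s, forall lA, eps A lA s = proj1_sig g lA (YE B).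
Proof.
  destruct (proj2_sig g) as (I & sA & sB & R). exists (inf sA).
  intros; symmetry; eapply repA; eauto.
Qed.
Lemma exB (g : tensor A B) : exists s, forall lB, eps B lB s = proj1_sig g (YE A) lB.
Proof.
  destruct (proj2_sig g) as (I & sA & sB & R). exists (inf sB).
  intros; symmetry; eapply repB; eauto.
Qed.

Definition etaA (g : tensor A B) : St A := proj1_sig (constructive_indefinite_description _ (exA g)).
Definition etaB (g : tensor A B) : St B := proj1_sig (constructive_indefinite_description _ (exB g)).
Lemma etaA_spec g lA : eps A lA (etaA g) = proj1_sig g lA (YE B).
Proof. unfold etaA. destruct (constructive_indefinite_description _ _); simpl; auto. Qed.
Lemma etaB_spec g lB : eps B lB (etaB g) = proj1_sig g (YE A) lB.
Proof. unfold etaB. destruct (constructive_indefinite_description _ _); simpl; auto. Qed.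

Section Meet.
Variables (J : Type) (g : J -> tensor A B).
Hypothesis HJ : inhabited J.

Definition K := { p : J * St A * St B |
  forall lA lB, Ble (proj1_sig (g (fst (fst p))) lA lB)
                    (Bprod (eps A lA (snd (fst p))) (eps B lB (snd p))) }.
Definition Ka (k : K) : St A := snd (fst (proj1_sig k)).
Definition Kb (k : K) : St B := snd (proj1_sig k).
Definition Kj (k : K) : J := fst (fst (proj1_sig k)).
Definition mfun lA lB := glbB (fun k : K => Bprod (eps A lA (Ka k)) (eps B lB (Kb k))).

Lemma K_inh : inhabited K.
Proof.
  destruct HJ as [j]. destruct (proj2_sig (g j)) as (I & sA & sB & [[i] H]).
  constructor. exists (j, sA i, sB i). simpl. intros lA lB. apply (H lA lB).
Qed.

Lemma m_in : exists (I : Type) (sA : I -> St A) (sB : I -> St B), represents A B mfun sA sB.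
Proof.
  exists K, Ka, Kb. split. apply K_inh. intros; apply glbB_glb, K_inh.
Qed.
Definition m : tensor A B := exist _ mfun m_in.

Lemma m_lb j : tensor_le A B m (g j).
Proof.
  intros lA lB. destruct (proj2_sig (g j)) as (I & sA & sB & [Hi H]).
  apply (H lA lB). intros i. simpl.
  set (k := exist (fun p : J * St A * St B => forall lA lB, Ble (proj1_sig (g (fst (fst p))) lA lB)
                    (Bprod (eps A lA (snd (fst p))) (eps B lB (snd p)))) (j, sA i, sB i)
                    (fun lA lB => proj1 (H lA lB) i)).
  exact (proj1 (glbB_glb _ K_inh) k).
Qed.
End Meet.

Lemma InfHom_A : InfHom A B (St A) etaA.
Proof.
  intros J g h HJ [Hl Hg]. split.
  - intros j. apply le_eps. intros l. rewrite !etaA_spec. apply Hl.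
  - intros y Hy. apply le_eps. intros l. rewrite etaA_spec.
    apply Ble_trans with (proj1_sig (m J g HJ) l (YE B)).
    + simpl. unfold mfun. apply (glbB_glb _ (K_inh J g HJ)). intros k.
      rewrite eps_YE, Bprod_Y.
      apply Ble_trans with (proj1_sig (g (Kj J g k)) l (YE B)).
      * rewrite <- etaA_spec. apply eps_le, Hy.
      * pose proof (proj2_sig k l (YE B)) as P. simpl in P. rewrite eps_YE, Bprod_Y in P. exact P.
    + apply (Hg (m J g HJ) (m_lb J g HJ)).
Qed.

Lemma InfHom_B : InfHom A B (St B) etaB.
Proof.
  intros J g h HJ [Hl Hg]. split.
  - intros j. apply le_eps. intros l. rewrite !etaB_spec. apply Hl.
  - intros y Hy. apply le_eps. intros l. rewrite etaB_spec.
    apply Ble_trans with (proj1_sig (m J g HJ) (YE A) l).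
    + simpl. unfold mfun. apply (glbB_glb _ (K_inh J g HJ)). intros k.
      rewrite eps_YE, Bprod_Yl.
      apply Ble_trans with (proj1_sig (g (Kj J g k)) (YE A) l).
      * rewrite <- etaB_spec. apply eps_le, Hy.
      * pose proof (proj2_sig k (YE A) l) as P. simpl in P. rewrite eps_YE, Bprod_Yl in P. exact P.
    + apply (Hg (m J g HJ) (m_lb J g HJ)).
Qed.
End Main.

Theorem mainTheorem7 (A B : ChuSE) :
  (exists eta : tensor A B -> St A,
      (forall (g : tensor A B) (I : Type) (sA : I -> St A) (sB : I -> St B),
          represents A B (proj1_sig g) sA sB -> eta g = inf sA)
      /\ InfHom A B (St A) eta)
  /\
  (exists lambda : tensor A B -> St B,
      (forall (g : tensor A B) (I : Type) (sA : I -> St A) (sB : I -> St B),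
          represents A B (proj1_sig g) sA sB -> lambda g = inf sB)
      /\ InfHom A B (St B) lambda).
Proof.
  split.
  - exists (etaA A B). split; [|apply InfHom_A].
    intros g I sA sB R. apply (eps_sep A). intros l. rewrite etaA_spec. eapply repA; eauto.
  - exists (etaB A B). split; [|apply InfHom_B].
    intros g I sA sB R. apply (eps_sep B). intros l. rewrite etaB_spec. eapply repB; eauto.
Qed.
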